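(* Fix an integer $L\ge 1$ and a real $r\in[0,\frac{L}{L+1})$. There exist an integer $N=N(r,L)$ and a function $g:\mathbb{N}\to[0,\infty)$ with $g(n)\to0$ as $n\to\infty$ such that for every integer $q\ge \max\{2,L\}$ and every $n\ge N$ with $rn\in\mathbb{N}$, every $(r,L)$ list-decodable code $C\subseteq[q]^n$ has $$|C|\le (1+g(n))\,q^{\,n-\lfloor\frac{L+1}{L}rn\rfloor}.$$
   Context: $[q]=\{1,\dots,q\}$. A code is a subset $C\subseteq[q]^n$. The Hamming distance $d(x,y)$ is the number of coordinates where $x,y$ differ, and $B_t(v)$ is the Hamming ball of radius $t$ around $v$ in $[q]^n$. A code $C$ is $(r,L)$ list-decodable if $|B_{rn}(v)\cap C|\le L$ for all $v\in[q]^n$. *)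

(* Defs.v *)
From mathcomp Require Import all_boot.
From Stdlib Require Import Reals.
Set Implicit Arguments. Unset Strict Implicit. Unset Printing Implicit Defensive.

Definition word (q n : nat) := {ffun 'I_n -> 'I_q}.

Definition hamming (q n : nat) (x y : word q n) : nat :=
  #|[set i : 'I_n | x i != y i]|.

Definition hball (q n : nat) (t : R) (v : word q n) : {set word q n} :=
  [set w : word q n | if Rle_dec (INR (hamming v w)) t then true else false].

Definition list_decodable (q n : nat) (r : R) (L : nat) (C : {set word q n}) : Prop :=
  forall v : word q n, #|hball (r * INR n)%R v :&: C| <= L.

(* Main.v *)
Require Import Defs.
From mathcomp Require Import all_boot.
From Stdlib Require Import Reals.
From mathcomp Require Import zify.
From Stdlib Require Import Lra Lia ZArith.
Set Implicit Arguments. Unset Strict Implicit. Unset Printing Implicit Defensive.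

Lemma subset_card (T : finType) (A : {set T}) k :
  k <= #|A| -> exists2 B : {set T}, B \subset A & #|B| = k.
Proof.
move/card_geqP => [s [us ss sA]]; exists [set x in s].
  by apply/subsetP => x; rewrite inE => /sA.
by rewrite cardsE -ss; apply/card_uniqP.
Qed.

Lemma subset_card2 (T : finType) (P A : {set T}) k :
  P \subset A -> #|P| <= k -> k <= #|A| ->
  exists B : {set T}, [/\ P \subset B, B \subset A & #|B| = k].
Proof.
move=> PA Pk kA.
have : k - #|P| <= #|A :\: P|.
  rewrite cardsD (setIidPr PA); lia.
case/subset_card => B' B'A B'k.
exists (P :|: B'); split.
- exact: subsetUl.
- rewrite subUset PA /=; apply: subset_trans B'A _; exact: subsetDl.
- rewrite cardsU.
  have -> : P :&: B' = set0.
    apply/setP => x; rewrite !inE; apply/negP => /andP[xP xB].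
    by move/subsetP: B'A => /(_ _ xB); rewrite inE xP.
  rewrite cards0 B'k; lia.
Qed.

Lemma center (n q : nat) (c : word q n) (f : word q n -> nat) (s : seq (word q n)) :
  forall E : {set 'I_n}, \sum_(y <- s) f y <= #|E| ->
  exists v : word q n, (forall j, j \notin E -> v j = c j) /\
    forall y, y \in s -> #|[set j in E | v j != y j]| + f y <= #|E|.
Proof.
elim: s => [|y s IH] E Hs.
  by exists c; split.
rewrite big_cons in Hs.
have : f y <= #|E| by lia.
case/subset_card => D DE Dk.
have cE' : #|E :\: D| = #|E| - f y by rewrite cardsD (setIidPr DE) Dk.
have : \sum_(y <- s) f y <= #|E :\: D| by rewrite cE'; lia.
case/IH => v' [Hv'1 Hv'2].
exists [ffun j => if j \in D then y j else v' j]; split.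
  move=> j jE; rewrite ffunE.
  have jD : j \notin D by apply: contra jE; apply/subsetP.
  rewrite (negbTE jD) Hv'1 // inE negb_and jE orbT //.
move=> y'; rewrite inE => /orP[/eqP ->|y's].
  have : [set j in E | [ffun j => if j \in D then y j else v' j] j != y j] \subset E :\: D.
    apply/subsetP => j; rewrite !inE ffunE; case: (j \in D) => /=; first by rewrite eqxx andbF.
    by case/andP => ->.
  move/subset_leq_card => H; apply: leq_trans (leq_add H (leqnn _)) _; rewrite cE'; lia.
have := Hv'2 _ y's.
have : [set j in E | [ffun j => if j \in D then y j else v' j] j != y' j] \subset
   D :|: [set j in E :\: D | v' j != y' j].
  apply/subsetP => j; rewrite !inE ffunE; case: (j \in D) => //= /andP[-> ->] //.
move/subset_leq_card => H1 H2.
have H3 := leq_card_setU D [set j in E :\: D | v' j != y' j].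
move: H3 => /leqifP; case: ifP => _ H3.
  apply: leq_trans (leq_add H1 (leqnn _)) _; rewrite (eqP H3) Dk; rewrite cE' in H2; lia.
apply: leq_trans (leq_add H1 (leqnn _)) _; apply: leq_trans (leq_add (ltnW H3) (leqnn _)) _.
rewrite Dk; rewrite cE' in H2; lia.
Qed.
Lemma card_interval n a b : a <= b -> b <= n ->
  #|[set j : 'I_n | a <= j < b]| = b - a.
Proof.
move=> ab bn.
rewrite -sum1dep_card.
rewrite -(big_mkord (fun j => a <= j < b) (fun _ => 1)) sum1_count /index_iota subn0.
have -> : n = a + (b - a) + (n - b) by lia.
rewrite !iotaD !count_cat.
rewrite (@eq_in_count _ _ pred0); last first.
  by move=> j; rewrite mem_iota => /andP[_ H]; apply/negbTE; rewrite negb_and -ltnNge; apply/orP; left; lia.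
rewrite (@eq_in_count _ _ pred0 (iota _ (n - b))); last first.
  move=> j; rewrite mem_iota => /andP[H _]; apply/negbTE; rewrite negb_and; apply/orP; right; rewrite -leqNgt; lia.
rewrite (@eq_in_count _ _ predT (iota (0 + a) _)); last first.
  move=> j; rewrite mem_iota => /andP[H1 H2]; apply/andP; split; lia.
rewrite !count_pred0 count_predT size_iota; lia.
Qed.
Lemma card_sum (T : finType) (A : {set T}) (P : pred T) :
  #|[set x in A | P x]| = \sum_(x in A) (P x : nat).
Proof.
rewrite -sum1dep_card big_mkcondr /=.
by apply: eq_bigr => x _; case: (P x).
Qed.

Lemma exists_le_sum (T : finType) (A : {set T}) (P : pred T) :
  ([exists x in A, P x] : nat) <= \sum_(x in A) (P x : nat).
Proof.
case: existsP => [[x /andP[xA Px]]|_] //.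
by rewrite (bigD1 x) //= Px.
Qed.

Lemma class_bound (q n L t m h : nat) (C X : {set word q n}) :
  1 <= L -> L <= q -> m + h + t = n -> L * h <= t + L ->
  (forall v : word q n, #|[set w in C | hamming v w <= t]| <= L) ->
  X \subset C ->
  (forall b c, b \in X -> c \in X -> forall j : 'I_n, j < m -> b j = c j) ->
  h * #|X| <= h * q + (L - 1) * #|X|.
Proof.
move=> L1 Lq Hn HLh HLD XC Hagr.
pose R0 := [set j : 'I_n | m <= j < m + h].
pose E := [set j : 'I_n | m + h <= j < n].
have cR0 : #|R0| = h by rewrite card_interval; lia.
have cE : #|E| = t by rewrite card_interval; lia.
case: (leqP #|X| L) => HxL.
  have : #|X| <= q by lia.
  move=> Hq; apply: leq_trans (leq_addr _ _); exact: leq_mul.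
pose agr (c b : word q n) := #|[set j in R0 | b j == c j]|.
have stepA : forall c, c \in X -> \sum_(b in X :\ c) agr c b <= L - 1.
  move=> c cX; rewrite leqNgt; apply/negP => Hgt.
  have HgtL : L <= \sum_(b in X :\ c) agr c b by lia.
  pose A := X :\ c.
  have cardA : L <= #|A| by move: HxL; rewrite /A (cardsD1 c X) cX /= add1n ltnS.
  pose P := [set b in A | 0 < agr c b].
  have PA : P \subset A by apply/subsetP => b; rewrite inE => /andP[].
  have [S [SA cS HS]] : exists S : {set word q n}, [/\ S \subset A, #|S| = L & L <= \sum_(b in S) agr c b].
    case: (leqP L #|P|) => HP.
      case/subset_card: HP => S SP cS; exists S; split => //.
        exact: subset_trans SP PA.
      rewrite -{1}cS -sum1_card; apply: leq_sum => b bS.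
      by move/subsetP: SP => /(_ _ bS); rewrite inE => /andP[].
    have [S [PS SA cS]] := subset_card2 PA (ltnW HP) cardA.
    exists S; split => //.
    apply: leq_trans HgtL _.
    rewrite (bigID (fun b => b \in S)) /=.
    rewrite [X in _ + X]big1; last first.
      move=> b /andP[bA bS]; apply/eqP; rewrite -leqn0 leqNgt; apply/negP => pos.
      have : b \in P by rewrite inE bA pos.
      by move/(subsetP PS); rewrite (negbTE bS).
    rewrite addn0; apply: eq_leq; apply: eq_bigl => b.
    by case bS: (b \in S); rewrite ?andbT ?andbF //; move/subsetP: SA => /(_ _ bS) ->.
  pose f (b : word q n) := #|[set j | (j \notin E) && (b j != c j)]|.
  have fagr : forall b, b \in X -> f b + agr c b <= h.
    move=> b bX.
    have H1 : [set j | (j \notin E) && (b j != c j)] :&: [set j in R0 | b j == c j] = set0.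
      apply/setP => j; rewrite !inE; apply/negP => /andP[/andP[_ H] /andP[_ H']].
      by rewrite H' in H.
    have H2 : [set j | (j \notin E) && (b j != c j)] :|: [set j in R0 | b j == c j] \subset R0.
      apply/subsetP => j; rewrite !inE => /orP[/andP[jE bc]|/andP[] //].
      apply/andP; split.
        rewrite leqNgt; apply/negP => jm.
        by rewrite (Hagr b c bX cX j jm) eqxx in bc.
      move: jE; rewrite negb_and -ltnNge (ltn_ord j) orbF //.
    have := cardsUI [set j | (j \notin E) && (b j != c j)] [set j in R0 | b j == c j].
    rewrite H1 cards0 addn0 => <-.
    rewrite -cR0; exact: subset_leq_card.
  have Hsumf : \sum_(y <- enum S) f y <= #|E|.
    rewrite big_enum cE.
    have : \sum_(b in S) (f b + agr c b) <= L * h.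
      rewrite -cS -sum_nat_const; apply: leq_sum => b bS; apply: fagr.
      by move/subsetP: SA => /(_ _ bS); rewrite inE => /andP[].
    rewrite big_split /= => H.
    have H' := leq_trans (leq_add (leqnn _) HS) (leq_trans H HLh).
    by rewrite leq_add2r in H'.
  have [v [Hv1 Hv2]] := center c Hsumf.
  have : L.+1 <= #|[set w in C | hamming v w <= t]|.
    have cS' : c \notin S.
      apply/negP => /(subsetP SA); by rewrite !inE eqxx.
    have -> : L.+1 = #|c |: S| by rewrite cardsU1 cS' cS.
    apply: subset_leq_card; apply/subsetP => w; rewrite !inE => /orP[/eqP ->|wS].
      rewrite (subsetP XC _ cX) /= /hamming -cE; apply: subset_leq_card.
      apply/subsetP => j; rewrite inE; apply: contraR => jE.
      by rewrite Hv1 // eqxx.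
    have wX : w \in X by move/subsetP: SA => /(_ _ wS); rewrite inE => /andP[].
    rewrite (subsetP XC _ wX) /= /hamming -cE.
    have := Hv2 w; rewrite mem_enum => /(_ wS) Hw.
    apply: leq_trans Hw.
    apply: leq_trans (leq_card_setU [set j in E | v j != w j] [set j | (j \notin E) && (w j != c j)]).1.
    apply: subset_leq_card; apply/subsetP => j; rewrite !inE => vw.
    case jE: (m + h <= j < n) => /=; first by rewrite vw.
    rewrite -(Hv1 j) ?inE ?jE // eq_sym //.
  by rewrite ltnNge HLD.
pose T (j : 'I_n) := [set c in X | [exists b in X, (b != c) && (b j == c j)]].
have stepB : forall j, #|X| <= q + #|T j|.
  move=> j; rewrite -(cardsID (T j) X) addnC; apply: leq_add.
    pose g := fun c : word q n => c j.
    have : {in X :\: T j &, injective g}.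
      move=> c1 c2; rewrite !inE => /andP[c1T c1X] /andP[c2T c2X] e.
      apply/eqP; apply: contraR c1T => ne; rewrite c1X /=.
      apply/existsP; exists c2; rewrite c2X /= eq_sym ne /=.
      by rewrite /g in e; rewrite e.
    by move/leq_card_in; rewrite card_ord.
  by apply: subset_leq_card; apply: subsetIr.
have stepC : \sum_(j in R0) #|T j| <= \sum_(c in X) \sum_(b in X :\ c) agr c b.
  under eq_bigr do rewrite card_sum.
  rewrite exchange_big /=; apply: leq_sum => c cX.
  apply: leq_trans (_ : \sum_(j in R0) \sum_(b in X :\ c) ((b j == c j) : nat) <= _).
    apply: leq_sum => j _.
    apply: leq_trans (exists_le_sum _ _).
    rewrite leq_eqVlt; apply/orP; left; apply/eqP; congr nat_of_bool.
    apply/existsP/existsP => [[b /andP[bX /andP[bc e]]]|[b /andP[]]].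
      by exists b; rewrite !inE bX bc e.
    rewrite !inE => /andP[bc bX] e; exists b; by rewrite bX bc e.
  rewrite exchange_big /=; apply: eq_leq; apply: eq_bigr => b _.
  by rewrite /agr card_sum.
have : \sum_(j in R0) #|X| <= \sum_(j in R0) (q + #|T j|) by apply: leq_sum => j _; exact: stepB.
rewrite big_split /= !sum_nat_const cR0 => H.
apply: leq_trans H _; rewrite leq_add2l.
apply: leq_trans stepC _.
rewrite mulnC -sum_nat_const; apply: leq_sum => c cX; exact: stepA.
Qed.

Lemma global_bound (q n L t k : nat) (C : {set word q n}) :
  1 <= L -> L <= q -> t <= k -> k < n -> L * k <= (L + 1) * t ->
  (forall v : word q n, #|[set w in C | hamming v w <= t]| <= L) ->
  (k + 1 - t) * #|C| <= (k + 1 - t) * expn q (n - k) + (L - 1) * #|C|.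
Proof.
move=> L1 Lq tk kn Lk HLD.
set m := n - k - 1.
set h := k + 1 - t.
have Hm : m <= n by rewrite /m; lia.
have Hn : m + h + t = n by rewrite /m /h; lia.
have HLh : L * h <= t + L by rewrite /h; nia.
pose pre (c : word q n) : {ffun 'I_m -> 'I_q} := [ffun i => c (widen_ord Hm i)].
pose X (p : {ffun 'I_m -> 'I_q}) := [set c in C | pre c == p].
have cardC : #|C| = \sum_(p : {ffun 'I_m -> 'I_q}) #|X p|.
  rewrite -sum1_card (partition_big pre xpredT) //=.
  by apply: eq_bigr => p _; rewrite sum1dep_card.
have Hcls : forall p, h * #|X p| <= h * q + (L - 1) * #|X p|.
  move=> p; apply: (class_bound (C:=C) L1 Lq Hn HLh HLD).
    by apply/subsetP => c; rewrite inE => /andP[].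
  move=> b c; rewrite !inE => /andP[_ /eqP bp] /andP[_ /eqP cp] j jm.
  have e : pre b (Ordinal jm) = pre c (Ordinal jm) by rewrite bp cp.
  rewrite !ffunE in e.
  by have -> : j = widen_ord Hm (Ordinal jm) by apply: val_inj.
rewrite {1}cardC big_distrr /=.
apply: leq_trans.
  apply: leq_sum => p _; exact: Hcls p.
rewrite cardC.
rewrite big_split /= sum_nat_const card_ffun !card_ord -big_distrr /=.
have -> : n - k = m.+1 by rewrite /m; lia.
by rewrite expnS mulnC -mulnA [q * _]mulnC.
Qed.

Lemma INR_expn a b : INR (expn a b) = (INR a ^ b)%R.
Proof.
elim: b => [|b IH]; first by rewrite expn0.
by rewrite expnS mult_INR IH.
Qed.

Lemma Int_part_eq (x : R) (z : Z) : (IZR z <= x < IZR z + 1)%R -> Int_part x = z.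
Proof.
move=> [H1 H2]; rewrite /Int_part.
have -> : up x = (z + 1)%Z.
  symmetry; apply: tech_up; rewrite plus_IZR; lra.
lia.
Qed.

Lemma ball_eq (q n t : nat) (r : R) (C : {set word q n}) (v : word q n) :
  INR t = (r * INR n)%R ->
  [set w in C | hamming v w <= t] = hball (r * INR n) v :&: C.
Proof.
move=> Ht; apply/setP => w; rewrite !inE -Ht.
case: Rle_dec => H /=.
  have /leP -> : (hamming v w <= t)%coq_nat by apply: INR_le.
  by rewrite andbC.
have : ~~ (hamming v w <= t).
  apply/negP => /leP H'; apply: H; exact: le_INR.
by move/negbTE ->; rewrite andbF.
Qed.

Lemma final_nat (c Q h t L : nat) : 1 <= L -> h * c <= h * Q + (L - 1) * c ->
  t + 1 <= L * h -> 2 * L * L <= t + 1 -> c * (t + 1) <= Q * (t + 1 + 2 * L * L).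
Proof.
move=> L1 F1 F2 F3.
have hL : L <= h.
  have : L * L <= L * h by nia.
  by rewrite leq_pmul2l //.
have [h' hh] : exists h', h = h' + (L - 1) by exists (h - (L - 1)); lia.
subst h.
have h'pos : 0 < h' by lia.
have G1 : h' * c <= (h' + (L - 1)) * Q.
  rewrite mulnDl in F1. by rewrite -(leq_add2r ((L - 1) * c)).
have G2 : (L - 1) * (t + 1) <= 2 * L * L * h' by nia.
rewrite -(leq_pmul2l h'pos).
apply: leq_trans (_ : (h' + (L - 1)) * Q * (t + 1) <= _).
  by rewrite mulnA leq_mul2r G1 orbT.
nia.
Qed.

Unset Implicit Arguments.
Set Strict Implicit.

Theorem corollary3p2 (L : nat) (r : R) :
  1 <= L -> (0 <= r)%R -> (r < INR L / (INR L + 1))%R ->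
  exists (N : nat) (g : nat -> R),
    (forall n, 0 <= g n)%R /\ Un_cv g 0%R /\
    forall (q n : nat), maxn 2 L <= q -> N <= n ->
      (exists t : nat, INR t = (r * INR n)%R) ->
      forall C : {set word q n}, list_decodable r L C ->
        (INR #|C| <= (1 + g n) *
           powerRZ (INR q)
             (Z.of_nat n - Int_part ((INR L + 1) / INR L * r * INR n)))%R.
Proof.
move=> L1 r0 rlt.
have L0 : (0 < INR L)%R by apply: lt_0_INR; apply/ltP.
case: (Rle_lt_or_eq_dec 0 r r0) => [rpos|r0eq]; last first.
  exists 0%N, (fun _ => 0%R); split; first by move=> n; lra.
  split.
    move=> eps He; exists 0%N => n _; rewrite /R_dist Rminus_0_r Rabs_R0 //.
  move=> q n _ _ _ C _.
  rewrite -r0eq Rmult_0_r Rmult_0_l (@Int_part_eq 0 0); last by simpl; lra.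
  rewrite Z.sub_0_r -pow_powerRZ -INR_expn Rplus_0_r Rmult_1_l.
  apply: le_INR; apply/leP.
  apply: leq_trans (max_card C) _.
  by rewrite /word card_ffun !card_ord.
pose A := (2 * INR L * INR L)%R.
have A0 : (0 <= A)%R by rewrite /A; nra.
have [N HN] := INR_unbounded (A / r).
have HN' : (A < r * INR N)%R.
  have := Rmult_lt_compat_r r _ _ rpos HN.
  have -> : (A / r * r = A)%R by field; lra.
  lra.
exists N, (fun n => A / (r * INR n + 1))%R; split.
  move=> n; apply: Rle_mult_inv_pos => //; have := pos_INR n; nra.
split.
  move=> eps Heps.
  have [N0 HN0] := INR_unbounded (A / (r * eps)).
  have HN0' : (A < r * eps * INR N0)%R.
    have Hre : (0 < r * eps)%R by nra.
    have := Rmult_lt_compat_r (r * eps) _ _ Hre HN0.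
    have -> : (A / (r * eps) * (r * eps) = A)%R by field; lra.
    lra.
  exists N0 => n Hn.
  have Hn' := le_INR _ _ Hn.
  have pn := pos_INR n.
  rewrite /R_dist Rminus_0_r Rabs_right; last first.
    apply: Rle_ge; apply: Rle_mult_inv_pos => //; nra.
  apply: (Rmult_lt_reg_r (r * INR n + 1)); first nra.
  rewrite /Rdiv Rmult_assoc Rinv_l; last nra.
  rewrite Rmult_1_r.
  have : (r * eps * INR N0 <= r * eps * INR n)%R.
    apply: Rmult_le_compat_l => //; nra.
  nra.
move=> q n Hq HNn [t Ht] C HC.
have Hn' : (INR N <= INR n)%R by apply: le_INR; apply/leP.
have tbig : (A < INR t)%R by rewrite Ht; nra.
have tbig_nat : 2 * L * L < t.
  apply/ltP; apply: INR_lt.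
  rewrite !mult_INR; rewrite /A in tbig; simpl (INR 2); lra.
have npos : (0 < INR n)%R.
  case: (Rlt_le_dec 0 (INR n)) => // H.
  have := pos_INR n; nra.
have rL : (r * (INR L + 1) < INR L)%R.
  have H1 : (0 < INR L + 1)%R by lra.
  have := Rmult_lt_compat_r (INR L + 1) _ _ H1 rlt.
  have -> : (INR L / (INR L + 1) * (INR L + 1) = INR L)%R by field; lra.
  done.
have Hlt : (L + 1) * t < L * n.
  apply/ltP; apply: INR_lt.
  rewrite !mult_INR plus_INR Ht; simpl (INR 1); nra.
pose k := ((L + 1) * t) %/ L.
have Lpos : 0 < L by [].
have Hk1 : L * k <= (L + 1) * t by rewrite mulnC; exact: leq_divM.
have Hk2 : (L + 1) * t < L * (k + 1).
  rewrite [L * _]mulnC [k + 1]addn1 /k; exact: ltn_ceil.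
have tk : t <= k.
  have : L * t < L * (k + 1) by nia.
  by rewrite ltn_pmul2l // addn1 ltnS.
have kn : k < n.
  have : L * k < L * n by nia.
  by rewrite ltn_pmul2l.
have HLD : forall v, #|[set w in C | hamming v w <= t]| <= L.
  by move=> v; rewrite (ball_eq C v Ht); exact: HC.
have Lq : L <= q by apply: leq_trans (leq_maxr 2 L) Hq.
have G := global_bound L1 Lq tk kn Hk1 HLD.
have F2 : t + 1 <= L * (k + 1 - t) by rewrite mulnBr; nia.
have F3 : 2 * L * L <= t + 1 by lia.
have F := final_nat L1 G F2 F3.
move/leP: F => /le_INR; rewrite !mult_INR !plus_INR !mult_INR => F.
rewrite (@Int_part_eq _ (Z.of_nat k)); last first.
  rewrite -INR_IZR_INZ Rmult_assoc -Ht.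
  have Hk1' : (INR L * INR k <= (INR L + 1) * INR t)%R.
    have := le_INR _ _ (elimT leP Hk1); rewrite !mult_INR plus_INR; simpl (INR 1); lra.
  have Hk2' : ((INR L + 1) * INR t < INR L * (INR k + 1))%R.
    have := lt_INR _ _ (elimT ltP Hk2); rewrite !mult_INR !plus_INR; simpl (INR 1); lra.
  set y := ((INR L + 1) / INR L * INR t)%R.
  have Hy : (INR L * y = (INR L + 1) * INR t)%R by rewrite /y; field; lra.
  split; nra.
rewrite -Nat2Z.inj_sub; last by apply/leP; exact: ltnW.
rewrite -pow_powerRZ -INR_expn -Ht.
simpl (INR 1) in F; simpl (INR 2) in F.
have tp := pos_INR t.
have Qp := pos_INR (expn q (n - k)).
apply: (Rmult_le_reg_r (INR t + 1)); first lra.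
have -> : ((1 + A / (INR t + 1)) * INR (expn q (n - k)) * (INR t + 1) =
           INR (expn q (n - k)) * (INR t + 1 + A))%R by field; lra.
rewrite /A; lra.
Qed.
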